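(* Let $X,Z$ be real Banach spaces and $Y\subset X^*$ a closed subspace. Let $T:X\to Z$ be a bounded linear operator such that $T^*$ is an isometric isomorphism from $Z^*$ onto $Y$. Let $\varepsilon>0$ and let $\alpha$ be an ordinal such that $B_{X^*}\cap Y\subset d_\varepsilon^\alpha(B_{X^*})$. Then for every ordinal $\beta$ and every $z\in Z^*$: if $z\in d_\varepsilon^\beta(B_{Z^*})$, then $T^*z\in d_\varepsilon^{\alpha+\beta}(B_{X^*})$.
   Context: For a Banach space $W$, $B_{W^*}$ is the closed unit ball of $W^*$. For $w\in W$, $t\in\mathbb R$, let $H(w,t)=\{w^*\in W^*: w^*(w)>t\}$. For a weak$^*$-compact $K\subset W^*$, a weak$^*$-slice of $K$ is any nonempty set $H(w,t)\cap K$. For $\varepsilon>0$, $d_\varepsilon K$ is $K$ minus the union of all weak$^*$-slices of $K$ of norm diameter less than $\varepsilon$; $d_\varepsilon^0K=K$, $d_\varepsilon^{\beta+1}K=d_\varepsilon(d_\varepsilon^\beta K)$, $d_\varepsilon^\beta K=\bigcap_{\mu<\beta}d_\varepsilon^\mu K$ for limit $\beta$. $\alpha+\beta$ is ordinal addition. *)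

(* Defs.v *)
From Stdlib Require Import Reals.
Open Scope R_scope.

Record Banach := mkBanach {
  car :> Type;
  vzero : car;
  vadd : car -> car -> car;
  vopp : car -> car;
  vscal : R -> car -> car;
  vnorm : car -> R;
  vadd_assoc : forall x y z, vadd x (vadd y z) = vadd (vadd x y) z;
  vadd_comm : forall x y, vadd x y = vadd y x;
  vadd_zero : forall x, vadd x vzero = x;
  vadd_opp : forall x, vadd x (vopp x) = vzero;
  vscal_one : forall x, vscal 1 x = x;
  vscal_assoc : forall a b x, vscal a (vscal b x) = vscal (a * b) x;
  vscal_distr_l : forall a x y, vscal a (vadd x y) = vadd (vscal a x) (vscal a y);
  vscal_distr_r : forall a b x, vscal (a + b) x = vadd (vscal a x) (vscal b x);
  vnorm_eq0 : forall x, vnorm x = 0 -> x = vzero;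
  vnorm_scal : forall a x, vnorm (vscal a x) = Rabs a * vnorm x;
  vnorm_triangle : forall x y, vnorm (vadd x y) <= vnorm x + vnorm y;
  vcomplete : forall u : nat -> car,
    (forall e, 0 < e -> exists N, forall m n, (N <= m)%nat -> (N <= n)%nat ->
        vnorm (vadd (u m) (vopp (u n))) < e) ->
    exists l, forall e, 0 < e -> exists N, forall n, (N <= n)%nat ->
        vnorm (vadd (u n) (vopp l)) < e
}.

Arguments vadd {b} : rename. Arguments vopp {b} : rename. Arguments vscal {b} : rename. Arguments vnorm {b} : rename.
Arguments vzero {b} : rename.

Definition dual (X : Banach) (f : X -> R) : Prop :=
  (forall x y, f (vadd x y) = f x + f y) /\
  (forall a x, f (vscal a x) = a * f x) /\
  (exists c, forall x, Rabs (f x) <= c * vnorm x).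

Definition dnorm_le (X : Banach) (f : X -> R) (c : R) : Prop :=
  forall x, Rabs (f x) <= c * vnorm x.

Definition dball (X : Banach) (f : X -> R) : Prop := dual X f /\ dnorm_le X f 1.

Definition bounded_linear (X Z : Banach) (T : X -> Z) : Prop :=
  (forall x y, T (vadd x y) = vadd (T x) (T y)) /\
  (forall a x, T (vscal a x) = vscal a (T x)) /\
  (exists c, forall x, vnorm (T x) <= c * vnorm x).

Definition closed_subspace (X : Banach) (Y : (X -> R) -> Prop) : Prop :=
  (forall f, Y f -> dual X f) /\
  Y (fun _ => 0) /\
  (forall f g, Y f -> Y g -> Y (fun x => f x + g x)) /\
  (forall a f, Y f -> Y (fun x => a * f x)) /\
  (forall f, dual X f ->
     (forall e, 0 < e -> exists g, Y g /\ dnorm_le X (fun x => f x - g x) e) ->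
     Y f).

Definition adj (X Z : Banach) (T : X -> Z) (g : Z -> R) : X -> R := fun x => g (T x).

(** T^star is an isometric isomorphism from Z^star onto Y (isometry: equal dual norms,
    i.e. the same sets of admissible bounds; linearity of T^star is automatic). *)
Definition adj_isometric_onto (X Z : Banach) (T : X -> Z) (Y : (X -> R) -> Prop) : Prop :=
  (forall g, dual Z g -> Y (adj X Z T g) /\
      (forall c, dnorm_le X (adj X Z T g) c <-> dnorm_le Z g c)) /\
  (forall f, Y f -> exists g, dual Z g /\ forall x, f x = adj X Z T g x).

Definition slice (X : Banach) (K : (X -> R) -> Prop) (w : X) (t : R) : (X -> R) -> Prop :=
  fun f => K f /\ f w > t.

Definition diam_lt (X : Banach) (S : (X -> R) -> Prop) (eps : R) : Prop :=
  exists d, d < eps /\ forall f g, S f -> S g -> dnorm_le X (fun x => f x - g x) d.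

Definition deriv (X : Banach) (eps : R) (K : (X -> R) -> Prop) : (X -> R) -> Prop :=
  fun f => K f /\ forall w t, f w > t -> ~ diam_lt X (slice X K w t) eps.

(** Ordinals as Brouwer trees with limits over arbitrary index types. *)
Inductive Ord : Type :=
| OZ : Ord
| OS : Ord -> Ord
| OL : forall I : Type, (I -> Ord) -> Ord.

(** Transfinite derivation d_eps^beta K; a limit node gives the intersection
    (together with K, so that an empty family gives d^0 K = K). *)
Fixpoint dit (X : Banach) (eps : R) (K : (X -> R) -> Prop) (b : Ord) : (X -> R) -> Prop :=
  match b with
  | OZ => K
  | OS b' => deriv X eps (dit X eps K b')
  | OL J f => fun g => K g /\ forall i, dit X eps K (f i) g
  end.

Fixpoint oadd (a b : Ord) : Ord :=
  match b with
  | OZ => a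
  | OS b' => OS (oadd a b')
  | OL J f => OL (option J) (fun o => match o with None => a | Some i => oadd a (f i) end)
  end.

(* Main.v *)
Require Import Defs.
From Stdlib Require Import Reals Lra.
Open Scope R_scope.

Lemma dit_sub (X : Banach) eps K b g : dit X eps K b g -> K g.
Proof.
  revert g; induction b as [|b IH|J f IH]; simpl; intros g H.
  - exact H.
  - destruct H as [H _]. apply IH; exact H.
  - destruct H as [H _]; exact H.
Qed.

Lemma dual_sub (Z : Banach) g1 g2 : dual Z g1 -> dual Z g2 ->
  dual Z (fun z => g1 z - g2 z).
Proof.
  intros [A1 [S1 [c1 B1]]] [A2 [S2 [c2 B2]]]. split; [|split].
  - intros x y. rewrite A1, A2. ring.
  - intros a x. rewrite S1, S2. ring.
  - exists (c1 + c2). intros x.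
    unfold Rminus. eapply Rle_trans. apply Rabs_triang.
    rewrite Rabs_Ropp. specialize (B1 x). specialize (B2 x). lra.
Qed.

Theorem mainTheorem5 (X Z : Banach) (Y : (X -> R) -> Prop) (T : X -> Z)
  (eps : R) (alpha : Ord) :
  closed_subspace X Y ->
  bounded_linear X Z T ->
  adj_isometric_onto X Z T Y ->
  0 < eps ->
  (forall f, dball X f -> Y f -> dit X eps (dball X) alpha f) ->
  forall (beta : Ord) (z : Z -> R),
    dual Z z ->
    dit Z eps (dball Z) beta z ->
    dit X eps (dball X) (oadd alpha beta) (adj X Z T z).
Proof.
  intros [HYd _] _ [Hiso _] _ Halpha.
  assert (Hball : forall z, dball Z z -> dball X (adj X Z T z) /\ Y (adj X Z T z)).
  { intros z [Dz Nz]. destruct (Hiso z Dz) as [Yz Hc].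
    split; [split|exact Yz].
    - apply HYd; exact Yz.
    - apply Hc; exact Nz. }
  intros beta. induction beta as [|b IH|J f IH]; intros z Dz Hz; simpl in *.
  - destruct (Hball z Hz) as [B1 B2]. apply Halpha; assumption.
  - destruct Hz as [Hz Hnd]. split.
    + apply IH; assumption.
    + intros x t Hxt [d [Hd Hdiam]].
      apply (Hnd (T x) t Hxt). exists d. split; [exact Hd|].
      intros g1 g2 [G1 G1t] [G2 G2t].
      assert (D1 : dual Z g1) by (apply (dit_sub Z eps (dball Z) b g1 G1)).
      assert (D2 : dual Z g2) by (apply (dit_sub Z eps (dball Z) b g2 G2)).
      pose proof (dual_sub Z g1 g2 D1 D2) as D12.
      apply (proj2 (Hiso _ D12) d).
      apply (Hdiam (adj X Z T g1) (adj X Z T g2)).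
      * split; [apply IH; assumption| exact G1t].
      * split; [apply IH; assumption| exact G2t].
  - destruct Hz as [Hz Hi]. split.
    + apply (proj1 (Hball z Hz)).
    + intros [i|].
      * apply IH; [exact Dz| apply Hi].
      * destruct (Hball z Hz). apply Halpha; assumption.
Qed.
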